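(* Let $\alpha\in\mathbb{R}$, let $\mathbb{Q}[x]^+_{x=\alpha}=\{p\in\mathbb{Q}[x]: p(\alpha)>0\}$, and suppose $\mathbb{Q}[x]^+_{x=\alpha}=H_1\sqcup H_2$ with $H_1,H_2$ disjoint subsets, each closed under addition and multiplication. If, for some $j\in\{1,2\}$, every polynomial of degree $1$ in $\mathbb{Q}[x]^+_{x=\alpha}$ belongs to $H_j$, then $H_j=\mathbb{Q}[x]^+_{x=\alpha}$. *)

(* Defs.v *)
From HB Require Import structures.
From mathcomp Require Import all_boot all_order all_algebra.
From mathcomp Require Import reals.
Set Implicit Arguments. Unset Strict Implicit. Unset Printing Implicit Defensive.
Import Order.TTheory GRing.Theory Num.Theory.
Local Open Scope ring_scope.

Definition posAt (R : realType) (alpha : R) (p : {poly rat}) : Prop :=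
  0 < (map_poly (ratr : rat -> R) p).[alpha].

Definition add_mul_closed (H : {poly rat} -> Prop) : Prop :=
  (forall p q, H p -> H q -> H (p + q)) /\ (forall p q, H p -> H q -> H (p * q)).

(* Main.v *)
Require Import Defs.
From HB Require Import structures.
From mathcomp Require Import all_boot all_order all_algebra.
From mathcomp Require Import reals.
From mathcomp Require Import ring lra.
Import Order.TTheory GRing.Theory Num.Theory.
Local Open Scope ring_scope.

Section Key.
Variables (R : realType) (alpha : R).
Let ev (p : {poly rat}) : R := (map_poly (ratr : rat -> R) p).[alpha].

Lemma evD p q : ev (p + q) = ev p + ev q.
Proof. by rewrite /ev rmorphD hornerD. Qed.
Lemma evM p q : ev (p * q) = ev p * ev q.
Proof. by rewrite /ev rmorphM hornerM. Qed.
Lemma evN p : ev (- p) = - ev p.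
Proof. by rewrite /ev rmorphN hornerN. Qed.
Lemma evC c : ev c%:P = ratr c.
Proof. by rewrite /ev map_polyC hornerC. Qed.
Lemma evX : ev 'X = alpha.
Proof. by rewrite /ev map_polyX hornerX. Qed.
Lemma evXsubC a : ev ('X - a%:P) = alpha - ratr a.
Proof. by rewrite evD evN evX evC. Qed.

Lemma ratbetween (x y : R) : x < y -> exists q : rat, x < ratr q < y.
Proof.
by move=> /rat_in_itvoo [q]; rewrite in_itv /= => h; exists q.
Qed.

Variable H : {poly rat} -> Prop.
Hypothesis HC : add_mul_closed H.
Hypothesis Hlin : forall p : {poly rat}, size p = 2%N -> posAt alpha p -> H p.

Lemma H_small (p : {poly rat}) : (size p <= 2)%N -> 0 < ev p -> H p.
Proof.
move=> hs hp; case: (ltnP 1 (size p)) => h1.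
  by apply: Hlin => //; apply/eqP; rewrite eqn_leq hs h1.
have hp0 := size1_polyC h1.
rewrite hp0 evC in hp; rewrite hp0.
move: (p`_0) hp => c hc.
have [b /andP [hb1 hb2]] := ratbetween (alpha - ratr c) alpha ltac:(lra).
have -> : c%:P = ('X - b%:P) + (- ('X - (c + b)%:P)).
  by rewrite polyCD; ring.
apply: (proj1 HC); apply: Hlin.
- exact: size_XsubC.
- by rewrite /posAt -/(ev _) evXsubC; lra.
- by rewrite size_polyN size_XsubC.
- by rewrite /posAt -/(ev _) evN evXsubC rmorphD /=; lra.
Qed.

Lemma H_all n (p : {poly rat}) : (size p <= n)%N -> 0 < ev p -> H p.
Proof.
elim: n p => [|n IH] p hs hp.
  by apply: H_small => //; rewrite (leq_trans hs).
case: (leqP (size p) 2) => h2; first exact: H_small.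
have [a /andP [ha1 ha2]] := ratbetween (alpha - 1) alpha ltac:(lra).
set c := p.[a].
have hroot : root (p - c%:P) a by rewrite /root hornerD hornerN hornerC subrr.
have [s hs'] := factor_theorem _ _ hroot.
have hsz1 : size (p - c%:P) = size p.
  by apply: size_polyDl; rewrite size_polyN (leq_ltn_trans (size_polyC_leq1 _)) // ltnW.
have s0 : s != 0.
  by apply/eqP => s0; move: hsz1; rewrite hs' s0 mul0r size_poly0 => h; rewrite -h in h2.
have hsz2 : size s = (size p).-1.
  by rewrite -hsz1 hs' size_Mmonic ?monicXsubC // size_XsubC addn2.
have hp' : p = c%:P + s * ('X - a%:P) by rewrite -hs'; ring.
have hev : ev p = ratr c + ev s * (alpha - ratr a) by rewrite {1}hp' evD evM evC evXsubC.
have hpos : 0 < alpha - ratr a by lra.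
have hlt : - ev s < ratr c / (alpha - ratr a).
  by rewrite ltr_pdivlMr //; nra.
have [K /andP [hK1 hK2]] := ratbetween _ _ hlt.
have -> : p = (c%:P - K%:P * ('X - a%:P)) + ('X - a%:P) * (s + K%:P).
  by rewrite {1}hp'; ring.
apply: (proj1 HC); [apply: H_small | apply: (proj2 HC)].
- apply: leq_trans (size_polyD _ _) _; rewrite geq_max size_polyN.
  rewrite (leq_trans (size_polyC_leq1 _)) //.
  by apply: leq_trans (size_polyMleq _ _) _; rewrite size_XsubC; case: (size K%:P) (size_polyC_leq1 K) => [|[]].
- rewrite evD evN evM evC evC evXsubC.
  by move: hK2; rewrite ltr_pdivlMr //; lra.
- by apply: Hlin; [exact: size_XsubC | rewrite /posAt -/(ev _) evXsubC].
- apply: IH.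
    rewrite size_polyDl; first by rewrite hsz2; move: hs; case: (size p).
    by rewrite (leq_ltn_trans (size_polyC_leq1 _)) // hsz2; case: (size p) h2 => [|[|[]]].
  by rewrite evD evC; lra.
Qed.
End Key.

Theorem lemma4p3 (R : realType) (alpha : R) (H1 H2 : {poly rat} -> Prop) :
  (forall p, posAt alpha p <-> (H1 p \/ H2 p)) ->
  (forall p, ~ (H1 p /\ H2 p)) ->
  add_mul_closed H1 -> add_mul_closed H2 ->
  forall j : bool, let Hj := if j then H1 else H2 in
  (forall p : {poly rat}, size p = 2%N -> posAt alpha p -> Hj p) ->
  forall p, Hj p <-> posAt alpha p.
Proof.
move=> hU _ c1 c2 j Hj hlin p; split.
  by rewrite /Hj; case: j {Hj hlin} => h; apply/hU; [left|right].
have cj : add_mul_closed Hj by rewrite /Hj; case: j {Hj hlin}.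
exact: (@H_all R alpha Hj cj hlin (size p) p (leqnn _)).
Qed.
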